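(* The Cesàro operator $\mathcal C: VH(\mathbb D)\to VH(\mathbb D)$ is not compact, i.e. there is no $0$-neighbourhood $U$ in $VH(\mathbb D)$ such that $\mathcal C(U)$ is relatively compact in $VH(\mathbb D)$.
   Context: $\mathbb D$ is the open unit disc. Define $v(z)=1$ if $|z|\le 1-1/e$ and $v(z)=(-\log(1-|z|))^{-1}$ if $1-1/e\le|z|<1$, $v_k=v^k$, $H^\infty_{v_k}=\{f \text{ analytic on }\mathbb D:\sup_{z\in\mathbb D}v_k(z)|f(z)|<\infty\}$ normed by this sup, and $VH(\mathbb D)=\bigcup_kH^\infty_{v_k}$ with the finest locally convex topology making all inclusions continuous. The Cesàro operator is $\mathcal C f(z)=\frac1z\int_0^z\frac{f(\zeta)}{1-\zeta}\,d\zeta$ for $z\neq0$, $\mathcal Cf(0)=f(0)$. *)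

(* Defs.v *)
From Stdlib Require Import Reals.
From Coquelicot Require Import Coquelicot.
Open Scope R_scope.

Definition inD (z : C) : Prop := Cmod z < 1.

Definition v (z : C) : R :=
  if Rle_dec (Cmod z) (1 - / exp 1) then 1 else / (- ln (1 - Cmod z)).
Definition vk (k : nat) (z : C) : R := (v z) ^ k.

Definition analytic_D (f : C -> C) : Prop :=
  forall z, inD z -> @ex_derive C_AbsRing C_NormedModule f z.

Definition in_Hvk (k : nat) (f : C -> C) : Prop :=
  analytic_D f /\ exists M : R, forall z, inD z -> vk k z * Cmod (f z) <= M.

Definition norm_le (k : nat) (f : C -> C) (r : R) : Prop :=
  forall z, inD z -> vk k z * Cmod (f z) <= r.

Definition in_VH (f : C -> C) : Prop := exists k, in_Hvk k f.

Definition fadd (f g : C -> C) : C -> C := fun z => (f z + g z)%C.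
Definition fscal (a : C) (f : C -> C) : C -> C := fun z => (a * f z)%C.

Definition absconvex (A : (C -> C) -> Prop) : Prop :=
  forall f g a b, A f -> A g -> Cmod a + Cmod b <= 1 -> A (fadd (fscal a f) (fscal b g)).

(** 0-neighbourhoods of the inductive limit topology (finest locally convex
    topology making all inclusions H^infty_{v_k} -> VH continuous):
    U contains an absolutely convex subset A of VH whose trace on every
    H^infty_{v_k} contains a ball of that Banach space. *)
Definition zero_nbhd (U : (C -> C) -> Prop) : Prop :=
  (forall f, U f -> in_VH f) /\
  exists A : (C -> C) -> Prop,
    (forall f, A f -> U f) /\ (forall f, A f -> in_VH f) /\ absconvex A /\
    forall k, exists eps, 0 < eps /\
      forall f, in_Hvk k f -> norm_le k f eps -> A f.

Definition VH_open (W : (C -> C) -> Prop) : Prop :=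
  (forall f, W f -> in_VH f) /\
  forall f, W f -> exists U, zero_nbhd U /\ forall g, U g -> W (fadd f g).

Definition VH_closure (S : (C -> C) -> Prop) : (C -> C) -> Prop :=
  fun f => in_VH f /\
    forall W, VH_open W -> W f -> exists g, W g /\ S g.

Definition VH_compact (K : (C -> C) -> Prop) : Prop :=
  (forall f, K f -> in_VH f) /\
  forall (I : Type) (O : I -> (C -> C) -> Prop),
    (forall i, VH_open (O i)) ->
    (forall f, K f -> exists i, O i f) ->
    exists l : list I, forall f, K f -> exists i, List.In i l /\ O i f.

Definition VH_rel_compact (S : (C -> C) -> Prop) : Prop :=
  (forall f, S f -> in_VH f) /\ VH_compact (VH_closure S).

(** The Cesaro operator: Cf(z) = (1/z) int_0^z f(w)/(1-w) dw, written via the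
    parametrisation w = t z, t in [0,1]; this gives Cf(0) = f(0). *)
Definition cesaro (f : C -> C) : C -> C :=
  fun z => RInt (V := C_R_CompleteNormedModule)
             (fun t : R => f (RtoC t * z) / (1 - RtoC t * z))%C 0 1.

Definition image (T : (C -> C) -> (C -> C)) (U : (C -> C) -> Prop) : (C -> C) -> Prop :=
  fun g => exists f, U f /\ g = T f.

(* Main.v *)
Require Import Defs.
From Stdlib Require Import Reals Lra Lia ZArith ClassicalEpsilon List FunctionalExtensionality.
From Coquelicot Require Import Coquelicot.
Open Scope R_scope.

Lemma Cinv_derive (w : C) : w <> 0%C ->
  @is_derive C_AbsRing (AbsRing_NormedModule C_AbsRing) (fun z : C => Cinv z) w (Copp (/ (w * w)))%C.
Proof.
  intros Hw.
  assert (Hm : 0 < Cmod w) by (apply Cmod_gt_0; auto).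
  split.
  - apply is_linear_scal_l.
  - intros x Hx. assert (Hx2 := @is_filter_lim_locally_unique C_AbsRing (AbsRing_NormedModule C_AbsRing) w x Hx). subst x.
    intros eps.
    apply (@locally_norm_le_locally C_AbsRing (AbsRing_NormedModule C_AbsRing)).
    assert (Hd : 0 < Rmin (Cmod w / 2) (eps * (Cmod w * Cmod w * Cmod w) / 2)).
    { apply Rmin_case; [lra|]. apply Rmult_lt_0_compat; [|lra].
      apply Rmult_lt_0_compat; [apply cond_pos|]. repeat apply Rmult_lt_0_compat; auto. }
    exists (mkposreal _ Hd). intros y Hy.
    unfold ball_norm in Hy. simpl in Hy.
    change (norm (minus y w)) with (Cmod (y - w)%C) in Hy.
    assert (H1 : Cmod (y - w) < Cmod w / 2) by (eapply Rlt_le_trans; [apply Hy|apply Rmin_l]).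
    assert (H2 : Cmod (y - w) < eps * (Cmod w * Cmod w * Cmod w) / 2) by (eapply Rlt_le_trans; [apply Hy|apply Rmin_r]).
    assert (Hy0 : Cmod w / 2 <= Cmod y).
    { assert (Cmod w <= Cmod y + Cmod (w - y)).
      { replace w with (y + (w - y))%C at 1 by ring. apply Cmod_triangle. }
      replace (w - y)%C with (Copp (y - w))%C in H by ring. rewrite Cmod_opp in H. lra. }
    assert (Hyn : ~ (@eq C y 0%C)). { intro; subst. rewrite Cmod_0 in Hy0. lra. }
    change (norm (minus (minus (/ y) (/ w)) (scal (minus y w) (- / (w * w)))))%C
      with (Cmod ((/ y - / w) - (y - w) * (- / (w * w))))%C.
    change (norm (minus y w)) with (Cmod (y - w)%C).
    replace ((/ y - / w) - (y - w) * (- / (w * w)))%C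
      with ((y - w) * (y - w) * / (w * w * y))%C by (field; auto).
    rewrite Cmod_mult, Cmod_inv, !Cmod_mult.
    2: { repeat apply Cmult_neq_0; auto. }
    set (d := Cmod (y - w)) in *.
    assert (0 <= d) by apply Cmod_ge_0.
    assert (Hp : 0 < Cmod w * Cmod w * Cmod y) by (repeat apply Rmult_lt_0_compat; lra).
    apply (Rmult_le_reg_r (Cmod w * Cmod w * Cmod y)); auto.
    rewrite Rmult_assoc, Rinv_l by lra.
    assert (d <= eps * (Cmod w * Cmod w * Cmod y)).
    { assert (eps * (Cmod w * Cmod w * Cmod w) / 2 <= eps * (Cmod w * Cmod w * Cmod y)).
      { assert (0 < eps) by apply cond_pos.
        assert (Cmod w * Cmod w * Cmod w / 2 <= Cmod w * Cmod w * Cmod y).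
        { assert (0 < Cmod w * Cmod w) by nra. nra. }
        nra. }
      lra. }
    assert (0 < eps) by apply cond_pos. nra.
Qed.

Lemma derive_transfer f z l : @is_derive C_AbsRing (AbsRing_NormedModule C_AbsRing) f z l -> @is_derive C_AbsRing C_NormedModule f z l.
Proof. intros [H1 H2]; split.
- destruct H1 as [a b [M [HM HH]]]. split; auto. exists M; split; auto.
- intros x Hx eps. specialize (H2 x Hx eps). exact H2.
Qed.

Lemma derive_transfer' f z l : @is_derive C_AbsRing C_NormedModule f z l -> @is_derive C_AbsRing (AbsRing_NormedModule C_AbsRing) f z l.
Proof. intros [H1 H2]; split.
- destruct H1 as [a b [M [HM HH]]]. split; auto. exists M; split; auto.
- intros x Hx eps. specialize (H2 x Hx eps). exact H2.
Qed.

Definition exC (f : C -> C) (z : C) : Prop := @ex_derive C_AbsRing (AbsRing_NormedModule C_AbsRing) f z.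

Lemma exC_const a z : exC (fun _ => a) z.
Proof. exists zero. apply (@is_derive_const C_AbsRing (AbsRing_NormedModule C_AbsRing)). Qed.

Lemma exC_id z : exC (fun t => t) z.
Proof. exists one. apply (@is_derive_id C_AbsRing). Qed.

Lemma exC_plus f g z : exC f z -> exC g z -> exC (fun t => f t + g t)%C z.
Proof. intros [a Ha] [b Hb]. exists (plus a b).
  apply (@is_derive_plus C_AbsRing (AbsRing_NormedModule C_AbsRing) f g z a b Ha Hb). Qed.

Lemma exC_mult f g z : exC f z -> exC g z -> exC (fun t => f t * g t)%C z.
Proof. intros [a Ha] [b Hb]. eexists.
  apply (@is_derive_mult C_AbsRing f g z a b Ha Hb). intros; apply Cmult_comm. Qed.

Lemma exC_opp f z : exC f z -> exC (fun t => - f t)%C z.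
Proof. intros H. apply (exC_mult (fun _ => (-1)%C) f z (exC_const _ _)) in H.
  destruct H as [l Hl]. exists l. eapply is_derive_ext; [|apply Hl]. intro t; simpl; ring. Qed.

Lemma exC_inv f z : exC f z -> f z <> 0%C -> exC (fun t => / f t)%C z.
Proof. intros H Hn. apply ex_derive_comp; auto. eexists. apply Cinv_derive; auto. Qed.

Lemma v_props z : Cmod z < 1 -> 0 < v z <= 1.
Proof.
  intros Hz. unfold v. destruct (Rle_dec (Cmod z) (1 - / exp 1)). lra.
  assert (He : / exp 1 = exp (-1)) by (rewrite <- exp_Ropp; f_equal; ring).
  assert (0 < 1 - Cmod z) by lra.
  assert (ln (1 - Cmod z) < -1).
  { rewrite <- (ln_exp (-1)). apply ln_increasing; lra. }
  split. apply Rinv_0_lt_compat; lra.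
  apply (Rmult_le_reg_l (- ln (1 - Cmod z))); [lra|]. rewrite Rinv_r by lra. lra.
Qed.

Lemma vk_props k z : Cmod z < 1 -> 0 < vk k z <= 1.
Proof.
  intros Hz. destruct (v_props z Hz). unfold vk. split.
  apply pow_lt; auto. rewrite <- (pow1 k). apply pow_incr; lra.
Qed.

Lemma v_small L z : 2 < L -> 1 - exp (-(L/2)) < Cmod z < 1 -> v z <= 2 / L.
Proof.
  intros HL [H1 H2]. unfold v.
  assert (exp (-(L/2)) < exp (-1)) by (apply exp_increasing; lra).
  assert (He : / exp 1 = exp (-1)) by (rewrite <- exp_Ropp; f_equal; ring).
  destruct (Rle_dec (Cmod z) (1 - / exp 1)). lra.
  assert (0 < 1 - Cmod z) by lra.
  assert (ln (1 - Cmod z) < -(L/2)).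
  { rewrite <- (ln_exp (-(L/2))). apply ln_increasing; lra. }
  replace (2 / L) with (/ (L/2)) by (field; lra).
  apply Rlt_le, Rinv_lt_contravar; nra.
Qed.

Lemma v_at L : 1 < L -> v (RtoC (1 - exp (-L))) = / L.
Proof.
  intros HL. unfold v.
  assert (0 < exp (-L)) by apply exp_pos.
  assert (exp (-L) < exp (-1)) by (apply exp_increasing; lra).
  assert (He : / exp 1 = exp (-1)) by (rewrite <- exp_Ropp; f_equal; ring).
  assert (exp (-1) < 1) by (rewrite <- exp_0; apply exp_increasing; lra).
  rewrite Cmod_R, Rabs_pos_eq by lra.
  destruct (Rle_dec (1 - exp (-L)) (1 - / exp 1)). lra.
  replace (1 - (1 - exp (-L))) with (exp (-L)) by ring.
  rewrite ln_exp. f_equal; ring.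
Qed.

Lemma sum_ge_last f n : (forall k, 0 <= f k) -> f n <= sum_f_R0 f n.
Proof.
  intros Hf. destruct n. simpl; lra. simpl.
  assert (0 <= sum_f_R0 f n). { apply cond_pos_sum; auto. } lra.
Qed.

Lemma sum_ge_term f n k : (forall k, 0 <= f k) -> (k <= n)%nat -> f k <= sum_f_R0 f n.
Proof.
  intros Hf Hk. induction n.
  - inversion Hk; subst. simpl; lra.
  - inversion Hk; subst. apply sum_ge_last; auto.
    simpl. specialize (IHn H0). specialize (Hf (S n)). lra.
Qed.

Lemma pow_le_exp j x : 0 <= x -> x ^ j <= INR (Factorial.fact j) * exp x.
Proof.
  intros Hx. pose proof (exp_ge_taylor x j Hx).
  assert (x ^ j / INR (Factorial.fact j) <= exp x).
  { eapply Rle_trans; [|apply H].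
    apply (sum_ge_last (fun k => x ^ k / INR (Factorial.fact k))).
    intros k. apply Rdiv_le_0_compat. apply pow_le; auto. apply INR_fact_lt_0. }
  pose proof (INR_fact_lt_0 j).
  unfold Rdiv in H0. apply (Rmult_le_compat_l (INR (Factorial.fact j))) in H0; [|lra].
  rewrite <- Rmult_assoc, (Rmult_comm (INR (Factorial.fact j))), Rmult_assoc, Rinv_r, Rmult_1_r in H0; lra.
Qed.

Definition tf (c r : R) : C -> C :=
  fun z => (RtoC c * (1 - z) * (/ (1 - RtoC r * z) * / (1 - RtoC r * z)))%C.

Lemma denom_bound r z : 0 <= r <= 1 -> 1 - r * Cmod z <= Cmod (1 - RtoC r * z)%C.
Proof.
  intros Hr.
  assert (Cmod 1 <= Cmod (1 - RtoC r * z)%C + Cmod (RtoC r * z)%C).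
  { replace (RtoC 1) with ((1 - RtoC r * z) + RtoC r * z)%C at 1 by ring. apply Cmod_triangle. }
  rewrite Cmod_1, Cmod_mult, Cmod_R, Rabs_pos_eq in H by lra. lra.
Qed.

Lemma denom_nz r z : 0 <= r <= 1 -> Cmod z < 1 -> (1 - RtoC r * z)%C <> 0%C.
Proof.
  intros Hr Hz He. pose proof (denom_bound r z Hr). rewrite He, Cmod_0 in H.
  assert (0 <= Cmod z) by apply Cmod_ge_0. nra.
Qed.

Lemma tf_analytic c r : 0 <= r <= 1 -> analytic_D (tf c r).
Proof.
  intros Hr z Hz. unfold inD in Hz.
  assert (H : exC (tf c r) z).
  { unfold tf. apply exC_mult. apply exC_mult. apply exC_const.
    apply exC_plus. apply exC_const. apply exC_opp. apply exC_id.
    assert (Hd : exC (fun t => 1 - RtoC r * t)%C z).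
    { apply exC_plus. apply exC_const. apply exC_opp. apply exC_mult. apply exC_const. apply exC_id. }
    apply exC_mult; apply exC_inv; auto; apply denom_nz; auto. }
  destruct H as [l Hl]. exists l. apply derive_transfer. exact Hl.
Qed.

Lemma tf_bound c r z d : 0 < c -> 0 <= r <= 1 -> Cmod z < 1 -> 0 < d -> d <= 1 - r * Cmod z ->
  Cmod (tf c r z) <= c * (/ d + (1 - r) * / (d * d)).
Proof.
  intros Hc Hr Hz Hd Hdb. unfold tf.
  pose proof (denom_nz r z Hr Hz) as Hnz.
  pose proof (denom_bound r z Hr) as HD.
  set (D := Cmod (1 - RtoC r * z)%C) in *.
  assert (Hs : 0 <= Cmod z) by apply Cmod_ge_0.
  assert (H1 : Cmod (1 - z)%C <= D + (1 - r)).
  { replace (1 - z)%C with ((1 - RtoC r * z) + (RtoC (r - 1) * z))%C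
      by (rewrite RtoC_minus; ring).
    eapply Rle_trans. apply Cmod_triangle. rewrite Cmod_mult, Cmod_R, Rabs_left1 by lra.
    fold D. nra. }
  rewrite !Cmod_mult, !Cmod_inv by exact Hnz. rewrite Cmod_R, Rabs_pos_eq by lra. fold D.
  assert (HDp : 0 < D) by lra.
  assert (0 <= Cmod (1 - z)%C) by apply Cmod_ge_0.
  rewrite Rmult_assoc. apply Rmult_le_compat_l; [lra|].
  assert (Cmod (1 - z)%C * (/ D * / D) <= (D + (1 - r)) * (/ D * / D)).
  { apply Rmult_le_compat_r; [|lra]. apply Rmult_le_pos; left; apply Rinv_0_lt_compat; lra. }
  eapply Rle_trans; [apply H0|].
  replace ((D + (1 - r)) * (/ D * / D)) with (/ D + (1 - r) * / (D * D)) by (field; lra).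
  apply Rplus_le_compat. apply Rinv_le_contravar; lra.
  apply Rmult_le_compat_l; [lra|]. apply Rinv_le_contravar. nra. nra.
Qed.
Lemma RInt_RtoC (F : R -> R) a b l : is_RInt F a b l ->
  RInt (V := C_R_CompleteNormedModule) (fun t => RtoC (F t)) a b = RtoC l.
Proof.
  intros H.
  pose proof (is_RInt_const (V:=R_NormedModule) a b 0) as H0.
  pose proof (is_RInt_fct_extend_pair (U := R_NormedModule) (V := R_NormedModule) (fun t => RtoC (F t)) a b l _ H H0) as H2.
  rewrite (is_RInt_unique (V:=C_R_CompleteNormedModule) _ _ _ _ H2). unfold RtoC. f_equal.
  unfold scal; simpl; unfold mult; simpl; ring.
Qed.

Lemma RtoC_nz x : x <> 0 -> RtoC x <> 0%C.
Proof. intros H E. apply H. injection E. auto. Qed.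

Lemma tf_cesaro c r : 0 < r < 1 -> cesaro (tf c r) (RtoC r) = RtoC (c / (1 - r * r)).
Proof.
  intros Hr. unfold cesaro.
  rewrite (RInt_ext (V:=C_R_CompleteNormedModule) _ (fun t => RtoC (c * / ((1 - t * (r * r)) * (1 - t * (r * r)))))).
  2: { intros t Ht. rewrite Rmin_left, Rmax_right in Ht by lra.
       assert (h1 : 1 - t * r <> 0) by nra.
       assert (h2 : 1 - t * (r * r) <> 0) by nra.
       assert (h1' : (1 - RtoC t * RtoC r)%C <> 0%C).
       { rewrite <- RtoC_mult, <- RtoC_minus. apply RtoC_nz; auto. }
       assert (h2' : (1 - RtoC r * (RtoC t * RtoC r))%C <> 0%C).
       { rewrite <- !RtoC_mult, <- RtoC_minus. apply RtoC_nz. replace (1 - r * (t * r)) with (1 - t * (r * r)) by ring. auto. }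
       unfold tf. rewrite RtoC_mult, RtoC_inv by (apply Rmult_integral_contrapositive; auto).
       rewrite RtoC_mult, !RtoC_minus, !RtoC_mult.
       replace (RtoC r * (RtoC t * RtoC r))%C with (RtoC t * (RtoC r * RtoC r))%C by ring.
       replace (RtoC r * (RtoC t * RtoC r))%C with (RtoC t * (RtoC r * RtoC r))%C in h2' by ring.
       match goal with |- ?a = ?b => change (@eq C a b) end.
       field. split; auto. }
  apply RInt_RtoC.
  assert (Hrr : 0 < r * r) by nra.
  set (G := fun t => c / (r * r) * / (1 - t * (r * r))).
  replace (c / (1 - r * r)) with (minus (G 1) (G 0)).
  2: { unfold G, minus, plus, opp; simpl. field. split; nra. }
  apply (is_RInt_derive (V:=R_CompleteNormedModule) G).
  - intros x Hx. rewrite Rmin_left, Rmax_right in Hx by lra. unfold G.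
    auto_derive. nra. field. split; nra.
  - intros x Hx. rewrite Rmin_left, Rmax_right in Hx by lra.
    apply (ex_derive_continuous (K:=R_AbsRing) (V:=R_NormedModule)).
    assert (x * (r * r) < 1) by nra. auto_derive. apply Rmult_integral_contrapositive; split; lra.
Qed.

Definition kappa (j : nat) : R := / (4 * 2 ^ j * INR (Factorial.fact j) + 4 * 2 ^ j).

Lemma kappa_pos j : 0 < kappa j.
Proof. unfold kappa. apply Rinv_0_lt_compat. pose proof (INR_fact_lt_0 j).
  pose proof (pow_lt 2 j). assert (0 < 2 ^ j * INR (Factorial.fact j)) by (apply Rmult_lt_0_compat; lra). nra. Qed.

Lemma testfun j eps y0 : 0 < eps -> 0 < y0 ->
  exists r f, 0 <= r < 1 /\ in_Hvk j f /\ norm_le j f eps /\ v (RtoC r) <= y0 /\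
    eps * kappa j <= vk j (RtoC r) * Cmod (cesaro f (RtoC r)).
Proof.
  intros Heps Hy0.
  set (L := 3 + / y0).
  assert (Hiy : 0 < / y0) by (apply Rinv_0_lt_compat; auto).
  assert (HL : 2 < L) by (unfold L; lra).
  set (E := exp (- L)). set (q := exp (- (L / 2))).
  assert (HE : 0 < E) by apply exp_pos. assert (Hq : 0 < q) by apply exp_pos.
  assert (HEq : E = q * q) by (unfold E, q; rewrite <- exp_plus; f_equal; field).
  assert (Hq1 : q < 1) by (unfold q; rewrite <- exp_0; apply exp_increasing; lra).
  assert (HeE : exp L * E = 1) by (unfold E; rewrite <- exp_plus; replace (L + - L) with 0 by ring; apply exp_0).
  assert (Heq : exp (L / 2) * q = 1) by (unfold q; rewrite <- exp_plus; replace (L / 2 + - (L / 2)) with 0 by ring; apply exp_0).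
  assert (HEq2 : E <= q) by nra.
  set (r := 1 - E).
  assert (Hr : 0 < r < 1) by (unfold r; nra).
  assert (HeL : 0 < exp L) by apply exp_pos.
  assert (HeL2 : 0 < exp (L / 2)) by apply exp_pos.
  set (T2 := (2 / L) ^ j).
  assert (HT2 : 0 < T2) by (apply pow_lt; unfold Rdiv; apply Rmult_lt_0_compat; [lra|apply Rinv_0_lt_compat; lra]).
  set (N := exp (L / 2) + 1 + 2 * T2 * exp L).
  assert (HN : 0 < N) by (unfold N; nra).
  set (c := eps / N).
  assert (Hc : 0 < c) by (apply Rdiv_lt_0_compat; auto).
  assert (Hnorm : norm_le j (tf c r) eps).
  { intros z Hz. unfold inD in Hz.
    assert (Hs : 0 <= Cmod z) by apply Cmod_ge_0.
    destruct (vk_props j z Hz) as [Hv1 Hv2].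
    assert (HcN : c * N = eps) by (unfold c; field; lra).
    destruct (Rle_lt_dec (Cmod z) (1 - q)) as [Hle|Hgt].
    - assert (Hb := tf_bound c r z q Hc ltac:(lra) Hz Hq ltac:(nra)).
      assert (Hi : / q = exp (L / 2)) by (field_simplify_eq; [lra|lra]).
      assert (Hi2 : (1 - r) * / (q * q) = 1) by (unfold r; rewrite HEq; field; lra).
      rewrite Hi, Hi2 in Hb.
      assert (0 <= Cmod (tf c r z)) by apply Cmod_ge_0.
      assert (vk j z * Cmod (tf c r z) <= Cmod (tf c r z)) by nra.
      assert (c * (exp (L / 2) + 1) <= c * N) by (apply Rmult_le_compat_l; [lra|]; unfold N; nra).
      lra.
    - assert (Hb := tf_bound c r z E Hc ltac:(lra) Hz HE ltac:(unfold r; nra)).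
      assert (Hi : / E = exp L) by (field_simplify_eq; lra).
      assert (Hi2 : (1 - r) * / (E * E) = exp L) by (unfold r; replace (1 - (1 - E)) with E by ring; field_simplify_eq; lra).
      rewrite Hi, Hi2 in Hb.
      assert (Hvz : v z <= 2 / L) by (apply v_small; auto; unfold q in Hgt; lra).
      assert (Hvk : vk j z <= T2).
      { unfold vk, T2. apply pow_incr. destruct (v_props z Hz); lra. }
      assert (0 <= Cmod (tf c r z)) by apply Cmod_ge_0.
      assert (vk j z * Cmod (tf c r z) <= T2 * (c * (exp L + exp L))).
      { apply Rmult_le_compat; lra. }
      assert (T2 * (c * (exp L + exp L)) <= c * N) by (unfold N; nra).
      lra. }
  exists r, (tf c r). split; [lra|]. split; [|split; [auto|split]].
  - split. apply tf_analytic; lra. exists eps. exact Hnorm.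
  - unfold r, E. rewrite v_at by lra. fold L.
    replace y0 with (/ / y0) by (field; lra). apply Rlt_le, Rinv_lt_contravar.
    apply Rmult_lt_0_compat; lra. unfold L; lra.
  - rewrite tf_cesaro by lra. rewrite Cmod_R.
    assert (Hrr : 0 < 1 - r * r) by nra.
    rewrite Rabs_pos_eq by (apply Rdiv_le_0_compat; lra).
    unfold vk, r, E. rewrite v_at by lra. fold E. fold r.
    set (P := L ^ j).
    assert (HP : 0 < P) by (apply pow_lt; lra).
    assert (HaP : (/ L) ^ j = / P) by (unfold P; rewrite pow_inv; auto).
    rewrite HaP.
    assert (HT2P : T2 * P = 2 ^ j) by (unfold T2, P; rewrite <- Rpow_mult_distr; f_equal; field; lra).
    assert (HPq : P * q <= 2 ^ j * INR (Factorial.fact j)).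
    { pose proof (pow_le_exp j (L / 2) ltac:(lra)).
      assert (P = 2 ^ j * (L / 2) ^ j) by (unfold P; rewrite <- Rpow_mult_distr; f_equal; field).
      pose proof (pow_lt 2 j).
      assert (P * q <= 2 ^ j * (INR (Factorial.fact j) * exp (L / 2)) * q).
      { rewrite H0. apply Rmult_le_compat_r; [lra|]. apply Rmult_le_compat_l; lra. }
      nra. }
    assert (HPE : P * E <= P * q) by (apply Rmult_le_compat_l; lra).
    assert (HNEP : N * E * P = P * q + P * E + 2 * 2 ^ j).
    { unfold N. replace ((exp (L / 2) + 1 + 2 * T2 * exp L) * E * P)
        with (exp (L / 2) * E * P + P * E + 2 * (T2 * P) * (exp L * E)) by ring.
      rewrite HT2P, HeE. rewrite HEq. replace (exp (L / 2) * (q * q) * P) with ((exp (L / 2) * q) * (P * q)) by ring.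
      rewrite Heq. ring. }
    assert (H1rr : 1 - r * r <= 2 * E) by (unfold r; nra).
    assert (HX : c * exp L / 2 <= c / (1 - r * r)).
    { replace (c * exp L / 2) with (c / (2 * E)).
      2: { field_simplify_eq; [|lra]. replace (c * E * exp L) with (c * (exp L * E)) by ring. rewrite HeE. ring. }
      unfold Rdiv. apply Rmult_le_compat_l; [lra|]. apply Rinv_le_contravar; lra. }
    assert (Hfin : eps * kappa j <= / P * (c * exp L / 2)).
    { unfold kappa, c.
      pose proof (pow_lt 2 j). pose proof (INR_fact_lt_0 j).
      set (K := 4 * 2 ^ j * INR (Factorial.fact j) + 4 * 2 ^ j).
      assert (HK : 0 < K) by (unfold K; nra).
      assert (H2N : 2 * N * E * P <= K) by (unfold K; nra).
      replace (/ P * (eps / N * exp L / 2)) with (eps * / (2 * N * E * P)).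
      2: { field_simplify_eq; [|repeat split; lra].
           replace (eps * E * exp L) with (eps * (exp L * E)) by ring. rewrite HeE. ring. }
      apply Rmult_le_compat_l; [lra|]. apply Rinv_le_contravar; [|lra].
      repeat apply Rmult_lt_0_compat; lra. }
    eapply Rle_trans; [apply Hfin|]. apply Rmult_le_compat_l; [left; apply Rinv_0_lt_compat; lra|]. exact HX.
Qed.

Lemma nat_unbounded x : exists n : nat, x < INR n.
Proof.
  destruct (Rle_lt_dec x 0). exists 1%nat. simpl; lra.
  destruct (archimed x) as [H1 H2].
  assert (0 <= up x)%Z. { apply le_IZR. lra. }
  exists (Z.to_nat (up x)). rewrite INR_IZR_INZ, Z2Nat.id by assumption. lra.
Qed.

Lemma vk_anti k1 k z : (k1 <= k)%nat -> Cmod z < 1 -> vk k z <= vk k1 z.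
Proof.
  intros Hk Hz. destruct (v_props z Hz). unfold vk.
  replace k with (k1 + (k - k1))%nat by lia. rewrite pow_add.
  assert (0 < v z ^ k1) by (apply pow_lt; lra).
  assert (v z ^ (k - k1) <= 1) by (rewrite <- (pow1 (k - k1)); apply pow_incr; lra).
  rewrite <- (Rmult_1_r (v z ^ k1)) at 2. apply Rmult_le_compat_l; lra.
Qed.

Lemma analytic_lin a b f g : analytic_D f -> analytic_D g ->
  analytic_D (fun z => (a * f z + b * g z)%C).
Proof.
  intros Hf Hg z Hz.
  destruct (Hf z Hz) as [lf Hlf]. destruct (Hg z Hz) as [lg Hlg].
  assert (H : exC (fun z => (a * f z + b * g z)%C) z).
  { apply (exC_plus (fun t => a * f t)%C (fun t => b * g t)%C).
    apply (exC_mult (fun _ => a) f). apply exC_const. exists lf. apply derive_transfer'. exact Hlf.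
    apply (exC_mult (fun _ => b) g). apply exC_const. exists lg. apply derive_transfer'. exact Hlg. }
  destruct H as [l Hl]. exists l. apply derive_transfer. exact Hl.
Qed.

Lemma VH_lin a b f g : in_VH f -> in_VH g -> in_VH (fun z => (a * f z + b * g z)%C).
Proof.
  intros [k1 [Af [M1 HM1]]] [k2 [Ag [M2 HM2]]].
  exists (Nat.max k1 k2). split. apply analytic_lin; auto.
  exists (Cmod a * M1 + Cmod b * M2). intros z Hz.
  pose proof (vk_anti k1 (Nat.max k1 k2) z ltac:(lia) Hz).
  pose proof (vk_anti k2 (Nat.max k1 k2) z ltac:(lia) Hz).
  destruct (vk_props (Nat.max k1 k2) z Hz).
  specialize (HM1 z Hz). specialize (HM2 z Hz).
  assert (Htri : Cmod (a * f z + b * g z)%C <= Cmod a * Cmod (f z) + Cmod b * Cmod (g z)).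
  { eapply Rle_trans. apply Cmod_triangle. rewrite !Cmod_mult. lra. }
  pose proof (Cmod_ge_0 a). pose proof (Cmod_ge_0 b).
  pose proof (Cmod_ge_0 (f z)). pose proof (Cmod_ge_0 (g z)).
  assert (vk (Nat.max k1 k2) z * Cmod (f z) <= M1).
  { eapply Rle_trans; [|apply HM1]. apply Rmult_le_compat_r; lra. }
  assert (vk (Nat.max k1 k2) z * Cmod (g z) <= M2).
  { eapply Rle_trans; [|apply HM2]. apply Rmult_le_compat_r; lra. }
  eapply Rle_trans. apply Rmult_le_compat_l. lra. apply Htri.
  replace (vk (Nat.max k1 k2) z * (Cmod a * Cmod (f z) + Cmod b * Cmod (g z)))
    with (Cmod a * (vk (Nat.max k1 k2) z * Cmod (f z)) + Cmod b * (vk (Nat.max k1 k2) z * Cmod (g z))) by ring.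
  apply Rplus_le_compat; apply Rmult_le_compat_l; lra.
Qed.

Lemma VH_add f g : in_VH f -> in_VH g -> in_VH (fadd f g).
Proof.
  intros Hf Hg. pose proof (VH_lin 1 1 f g Hf Hg).
  unfold fadd. replace (fun z => (f z + g z)%C) with (fun z => (1 * f z + 1 * g z)%C); auto.
  apply functional_extensionality. intros; ring.
Qed.

Lemma fold_max_ge (l : list nat) i : In i l -> (i <= fold_right Nat.max 0 l)%nat.
Proof. induction l; simpl; intros H. destruct H. destruct H as [H|H]. subst; lia. apply IHl in H; lia. Qed.

Theorem corollary2p5 :
  ~ exists U : (C -> C) -> Prop, zero_nbhd U /\ VH_rel_compact (image cesaro U).
Proof.
  intros [U [[HUVH [A0 [HAU [HAVH [HAabs Hball]]]]] [HS [HKVH HK]]]].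
  set (epsf := fun k => proj1_sig (constructive_indefinite_description _ (Hball k))).
  assert (Heps : forall k, 0 < epsf k /\ forall f, in_Hvk k f -> norm_le k f (epsf k) -> A0 f).
  { intros k. unfold epsf. destruct (constructive_indefinite_description _ (Hball k)) as [e He]. exact He. }
  assert (Hch : forall j, {p : R * (C -> C) |
     0 <= fst p < 1 /\ in_Hvk j (snd p) /\ norm_le j (snd p) (epsf j) /\
     v (RtoC (fst p)) <= epsf j * kappa j / (INR j + 1) /\
     epsf j * kappa j <= vk j (RtoC (fst p)) * Cmod (cesaro (snd p) (RtoC (fst p)))}).
  { intros j. apply constructive_indefinite_description.
    destruct (Heps j) as [He _].
    assert (0 < epsf j * kappa j / (INR j + 1)).
    { apply Rdiv_lt_0_compat. apply Rmult_lt_0_compat; auto. apply kappa_pos.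
      pose proof (pos_INR j); lra. }
    destruct (testfun j (epsf j) (epsf j * kappa j / (INR j + 1)) He H) as [r [f Hrf]].
    exists (r, f). exact Hrf. }
  set (rr := fun j => fst (proj1_sig (Hch j))).
  set (ff := fun j => snd (proj1_sig (Hch j))).
  assert (Hj : forall j,
     0 <= rr j < 1 /\ in_Hvk j (ff j) /\ norm_le j (ff j) (epsf j) /\
     v (RtoC (rr j)) <= epsf j * kappa j / (INR j + 1) /\
     epsf j * kappa j <= vk j (RtoC (rr j)) * Cmod (cesaro (ff j) (RtoC (rr j)))).
  { intros j. unfold rr, ff. destruct (proj2_sig (Hch j)) as [h1 [h2 [h3 [h4 h5]]]]. auto. }
  assert (HD : forall j, Cmod (RtoC (rr j)) < 1).
  { intros j. destruct (Hj j) as [h _]. rewrite Cmod_R, Rabs_pos_eq; lra. }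
  set (a := fun j => INR j * vk j (RtoC (rr j)) / (epsf j * kappa j)).
  assert (Hek : forall j, 0 < epsf j * kappa j).
  { intros j. apply Rmult_lt_0_compat. apply Heps. apply kappa_pos. }
  assert (Ha0 : forall j, 0 <= a j).
  { intros j. unfold a. apply Rdiv_le_0_compat; [|apply Hek].
    apply Rmult_le_pos. apply pos_INR. destruct (vk_props j _ (HD j)); lra. }
  assert (Hlow : forall j, INR j <= a j * Cmod (cesaro (ff j) (RtoC (rr j)))).
  { intros j. destruct (Hj j) as [_ [_ [_ [_ h5]]]]. pose proof (Hek j).
    unfold a. unfold Rdiv.
    replace (INR j * vk j (RtoC (rr j)) * / (epsf j * kappa j) * Cmod (cesaro (ff j) (RtoC (rr j))))
      with (INR j * (vk j (RtoC (rr j)) * Cmod (cesaro (ff j) (RtoC (rr j)))) * / (epsf j * kappa j)) by ring.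
    apply (Rmult_le_reg_r (epsf j * kappa j)); auto.
    rewrite Rmult_assoc, Rinv_l by lra. rewrite Rmult_1_r.
    apply Rmult_le_compat_l. apply pos_INR. exact h5. }
  assert (Hc : forall k, exists ck, 0 <= ck /\ forall j, a j <= ck * vk k (RtoC (rr j))).
  { intros k.
    exists (1 + sum_f_R0 (fun j => a j / vk k (RtoC (rr j))) k).
    assert (Hnn : forall j, 0 <= a j / vk k (RtoC (rr j))).
    { intros j. apply Rdiv_le_0_compat. apply Ha0. apply (vk_props k _ (HD j)). }
    pose proof (cond_pos_sum _ k Hnn).
    split; [lra|]. intros j.
    destruct (vk_props k _ (HD j)) as [Hv1 Hv2].
    destruct (le_lt_dec j k) as [Hjk|Hjk].
    - pose proof (sum_ge_term _ k j Hnn Hjk).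
      assert (a j / vk k (RtoC (rr j)) <= 1 + sum_f_R0 (fun j => a j / vk k (RtoC (rr j))) k) by lra.
      apply Rmult_le_compat_r with (r := vk k (RtoC (rr j))) in H1; [|lra].
      unfold Rdiv in H1. rewrite Rmult_assoc, Rinv_l, Rmult_1_r in H1 by lra. exact H1.
    - destruct (Hj j) as [_ [_ [_ [h4 _]]]].
      destruct (v_props _ (HD j)) as [Hw1 Hw2].
      set (w := v (RtoC (rr j))) in *.
      assert (Hvkj : vk j (RtoC (rr j)) <= w * vk k (RtoC (rr j))).
      { unfold vk. fold w. replace j with (k + S (j - S k))%nat by lia.
        rewrite pow_add. simpl.
        assert (w ^ (j - S k) <= 1) by (rewrite <- (pow1 (j - S k)); apply pow_incr; lra).
        assert (0 <= w ^ k) by (apply pow_le; lra).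
        replace (w ^ k * (w * w ^ (j - S k))) with ((w * w ^ k) * w ^ (j - S k)) by ring.
        rewrite <- (Rmult_1_r (w * (w ^ k))) at 2. apply Rmult_le_compat_l; [|lra].
        apply Rmult_le_pos; lra. }
      pose proof (Hek j). pose proof (pos_INR j).
      assert (Hwj : INR j * w <= epsf j * kappa j).
      { assert (INR j * w <= INR j * (epsf j * kappa j / (INR j + 1))) by (apply Rmult_le_compat_l; lra).
        assert (INR j * (epsf j * kappa j / (INR j + 1)) <= epsf j * kappa j).
        { unfold Rdiv. apply (Rmult_le_reg_r (INR j + 1)); [lra|].
          replace (INR j * (epsf j * kappa j * / (INR j + 1)) * (INR j + 1))
            with (INR j * (epsf j * kappa j)) by (field; lra). nra. }
        lra. }
      assert (a j <= vk k (RtoC (rr j))).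
      { unfold a. unfold Rdiv. apply (Rmult_le_reg_r (epsf j * kappa j)); [lra|].
        rewrite Rmult_assoc, Rinv_l, Rmult_1_r by lra.
        assert (INR j * vk j (RtoC (rr j)) <= INR j * (w * vk k (RtoC (rr j)))) by (apply Rmult_le_compat_l; lra).
        assert (INR j * (w * vk k (RtoC (rr j))) = (INR j * w) * vk k (RtoC (rr j))) by ring.
        assert ((INR j * w) * vk k (RtoC (rr j)) <= (epsf j * kappa j) * vk k (RtoC (rr j))) by (apply Rmult_le_compat_r; lra).
        lra. }
      assert (vk k (RtoC (rr j)) <= (1 + sum_f_R0 (fun j => a j / vk k (RtoC (rr j))) k) * vk k (RtoC (rr j))) by nra.
      lra. }
  assert (Hpt : forall k f M, (forall z, inD z -> vk k z * Cmod (f z) <= M) ->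
      exists ck, 0 <= ck /\ forall j, a j * Cmod (f (RtoC (rr j))) <= ck * M).
  { intros k f M HM. destruct (Hc k) as [ck [Hck Hck2]]. exists ck. split; auto. intros j.
    pose proof (Cmod_ge_0 (f (RtoC (rr j)))).
    eapply Rle_trans. apply Rmult_le_compat_r; [auto|apply Hck2].
    rewrite Rmult_assoc. apply Rmult_le_compat_l; auto. apply HM. apply HD. }
  set (W := fun (n : nat) (f : C -> C) => in_VH f /\ exists m, m < INR n /\
             forall j, a j * Cmod (f (RtoC (rr j))) <= m).
  set (U0 := fun (d : R) (g : C -> C) => in_VH g /\ forall j, a j * Cmod (g (RtoC (rr j))) <= d).
  assert (HU0 : forall d, 0 < d -> zero_nbhd (U0 d)).
  { intros d Hd. split. intros f [Hf _]; auto.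
    exists (U0 d). split; [auto|]. split; [intros f [Hf _]; auto|]. split.
    - intros f g a1 b1 [Hf1 Hf2] [Hg1 Hg2] Hab. split.
      + unfold fadd, fscal. apply VH_lin; auto.
      + intros j. unfold fadd, fscal.
        assert (Cmod (a1 * f (RtoC (rr j)) + b1 * g (RtoC (rr j)))%C <=
                Cmod a1 * Cmod (f (RtoC (rr j))) + Cmod b1 * Cmod (g (RtoC (rr j)))).
        { eapply Rle_trans. apply Cmod_triangle. rewrite !Cmod_mult. lra. }
        specialize (Hf2 j). specialize (Hg2 j). pose proof (Ha0 j).
        pose proof (Cmod_ge_0 a1). pose proof (Cmod_ge_0 b1).
        assert (a j * Cmod (a1 * f (RtoC (rr j)) + b1 * g (RtoC (rr j)))%C <=
                Cmod a1 * (a j * Cmod (f (RtoC (rr j)))) + Cmod b1 * (a j * Cmod (g (RtoC (rr j))))).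
        { eapply Rle_trans. apply Rmult_le_compat_l; [auto|apply H]. lra. }
        assert (Cmod a1 * (a j * Cmod (f (RtoC (rr j)))) <= Cmod a1 * d) by (apply Rmult_le_compat_l; auto).
        assert (Cmod b1 * (a j * Cmod (g (RtoC (rr j)))) <= Cmod b1 * d) by (apply Rmult_le_compat_l; auto).
        nra.
    - intros k. destruct (Hc k) as [ck [Hck Hck2]].
      exists (d / (ck + 1)). split. apply Rdiv_lt_0_compat; lra.
      intros g Hg Hn. split. exists k; auto.
      intros j. pose proof (Cmod_ge_0 (g (RtoC (rr j)))).
      eapply Rle_trans. apply Rmult_le_compat_r; [auto|apply Hck2].
      rewrite Rmult_assoc.
      assert (vk k (RtoC (rr j)) * Cmod (g (RtoC (rr j))) <= d / (ck + 1)) by (apply Hn; apply HD).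
      assert (ck * (vk k (RtoC (rr j)) * Cmod (g (RtoC (rr j)))) <= ck * (d / (ck + 1))) by (apply Rmult_le_compat_l; auto).
      assert (ck * (d / (ck + 1)) <= d).
      { unfold Rdiv. apply (Rmult_le_reg_r (ck + 1)); [lra|].
        replace (ck * (d * / (ck + 1)) * (ck + 1)) with (ck * d) by (field; lra). nra. }
      lra. }
  assert (HWo : forall n, VH_open (W n)).
  { intros n. split. intros f [Hf _]; auto.
    intros f [Hf [m [Hm Hfm]]].
    exists (U0 ((INR n - m) / 2)). split. apply HU0; lra.
    intros g [Hg Hgb]. split. apply VH_add; auto.
    exists (m + (INR n - m) / 2). split; [lra|]. intros j. unfold fadd.
    specialize (Hfm j). specialize (Hgb j). pose proof (Ha0 j).
    assert (Cmod (f (RtoC (rr j)) + g (RtoC (rr j)))%C <= Cmod (f (RtoC (rr j))) + Cmod (g (RtoC (rr j)))) by apply Cmod_triangle.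
    assert (a j * Cmod (f (RtoC (rr j)) + g (RtoC (rr j)))%C <= a j * (Cmod (f (RtoC (rr j))) + Cmod (g (RtoC (rr j))))) by (apply Rmult_le_compat_l; auto).
    lra. }
  assert (Hcov : forall f, VH_closure (image cesaro U) f -> exists i, W i f).
  { intros f [[k [Hf [M HM]]] _].
    destruct (Hpt k f M HM) as [ck [Hck Hb]].
    destruct (nat_unbounded (ck * M)) as [n Hn].
    exists n. split. exists k. split; auto. exists M; auto.
    exists (ck * M). split; auto. }
  destruct (HK nat W HWo Hcov) as [l Hl].
  set (N := fold_right Nat.max 0%nat l).
  assert (Hg : VH_closure (image cesaro U) (cesaro (ff N))).
  { assert (Him : image cesaro U (cesaro (ff N))).
    { exists (ff N). split; auto. apply HAU. destruct (Hj N) as [_ [h2 [h3 _]]].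
      apply (proj2 (Heps N)); auto. }
    split. apply HS; auto.
    intros W' _ HW'. exists (cesaro (ff N)). split; auto. }
  destruct (Hl _ Hg) as [i [Hi [_ [m [Hm Hmb]]]]].
  specialize (Hmb N). specialize (Hlow N).
  pose proof (fold_max_ge l i Hi). fold N in H.
  apply le_INR in H. lra.
Qed.
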